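(* Let $(X,\Sigma,\mu)$ be a semi-finite measure space, and let $E$ be the ideal in $\mathrm{L}^0(X,\Sigma,\mu)$ consisting of (equivalence classes of) measurable functions with $\sigma$-finite supports. Then $E$ admits a uo-Lebesgue topology, which is the topology of local convergence in measure, and $E$ has the countable sup property. Consequently: (1) every net in $E$ that converges locally in measure has an embedded sequence that converges almost everywhere as well as locally in measure to the same limit; (2) a sequence in $E$ converges locally in measure to $f\in E$ if and only if every subsequence has a further subsequence that converges almost everywhere to $f$.
   Context: $\mathrm{L}^0(X,\Sigma,\mu)$ is the vector lattice of measurable real functions modulo $\mu$-a.e. equality. A measure space is semi-finite if every set of infinite measure contains a measurable subset of finite positive measure. A net $(f_\alpha)$ converges locally in measure to $f$ if $\mu(\{t\in B: |f_\alpha(t)-f(t)|\geq\varepsilon\})\to0$ for every $\varepsilon>0$ and every $B\in\Sigma$ with $\mu(B)<\infty$. A uo-Lebesgue topology on a vector lattice is a Hausdorff linear topology with a zero neighbourhood basis of solid sets in which every uo-convergent net converges to the same limit (uo-convergence: $|x_\alpha-x|\wedge|y|\to0$ in order for all $y$; order convergence: there is a net $y_\beta\downarrow0$ such that for each $\beta_0$ eventually $|x_\alpha-x|\leq y_{\beta_0}$). Countable sup property: every subset with a supremum contains an at most countable subset with the same supremum. Embedded sequence: given a net $(x_\alpha)_{\alpha\in A}$, a sequence $(x_{\alpha_n})$ with $\alpha_1\leq\alpha_2\leq\dotsb$, strictly increasing when $A$ has no largest element. *)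

(* Defs.v *)
From HB Require Import structures.
From mathcomp Require Import all_boot all_order all_algebra.
From mathcomp Require Import all_classical all_reals all_analysis.
Set Implicit Arguments. Unset Strict Implicit. Unset Printing Implicit Defensive.
Import Order.TTheory GRing.Theory Num.Theory.
Local Open Scope classical_set_scope.
Local Open Scope ring_scope.

Definition directed (A : Type) (le : A -> A -> Prop) : Prop :=
  (exists a : A, True) /\ (forall a, le a a) /\
  (forall a b c, le a b -> le b c -> le a c) /\
  (forall a b, exists c, le a c /\ le b c).

Definition ev_net (A : Type) (le : A -> A -> Prop) (P : A -> Prop) : Prop :=
  exists a0, forall a, le a0 a -> P a.

Definition natle (m n : nat) : Prop := (m <= n)%N.

Definition embedded (A : Type) (le : A -> A -> Prop) (alpha : nat -> A) : Prop :=
  (forall n, le (alpha n) (alpha n.+1)) /\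
  ((~ exists a, forall b, le b a) ->
     forall n, le (alpha n) (alpha n.+1) /\ ~ le (alpha n.+1) (alpha n)).

Section Meas.
Context {d : measure_display} {T : measurableType d} {R : realType}.
Variable mu : {measure set T -> \bar R}.

Definition semi_finite : Prop :=
  forall A, measurable A -> mu A = +oo%E ->
    exists B, [/\ measurable B, B `<=` A & (0 < mu B < +oo)%E].

(* sigma-finite support (up to a null set, so invariant under a.e. equality) *)
Definition sigma_finite_support (f : T -> R) : Prop :=
  exists F : nat -> set T,
    (forall n, measurable (F n) /\ (mu (F n) < +oo)%E) /\
    mu.-negligible ([set t | f t != 0] `\` \bigcup_n F n).

(* the ideal E of L^0: (representatives of) measurable functions with
   sigma-finite support *)
Definition L0sf (f : T -> R) : Prop :=
  measurable_fun setT f /\ sigma_finite_support f.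

Definition ale (f g : T -> R) : Prop := {ae mu, forall t, f t <= g t}.
Definition aeq (f g : T -> R) : Prop := {ae mu, forall t, f t = g t}.

Definition is_sup_E (S : set (T -> R)) (s : T -> R) : Prop :=
  L0sf s /\ (forall g, S g -> ale g s) /\
  (forall u, L0sf u -> (forall g, S g -> ale g u) -> ale s u).

Definition countable_sup_property : Prop :=
  forall (S : set (T -> R)) (s : T -> R), S `<=` L0sf -> is_sup_E S s ->
    exists S' : set (T -> R), [/\ S' `<=` S, countable S' & is_sup_E S' s].

Definition order_conv (A : Type) (le : A -> A -> Prop)
    (x : A -> T -> R) (x0 : T -> R) : Prop :=
  exists (B : Type) (leB : B -> B -> Prop) (y : B -> T -> R),
    [/\ directed leB,
        (forall b, L0sf (y b)),
        (forall b1 b2, leB b1 b2 -> ale (y b2) (y b1)),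
        (forall b, ale (fun _ => 0) (y b)) /\
        (forall z, L0sf z -> (forall b, ale z (y b)) -> ale z (fun _ => 0)) &
        (forall b0, ev_net le (fun a => ale (fun t => `|x a t - x0 t|) (y b0)))].

Definition uo_conv (A : Type) (le : A -> A -> Prop)
    (x : A -> T -> R) (x0 : T -> R) : Prop :=
  forall y, L0sf y ->
    order_conv le (fun a t => Num.min `|x a t - x0 t| `|y t|) (fun _ => 0).

Definition lm_conv (A : Type) (le : A -> A -> Prop)
    (x : A -> T -> R) (f : T -> R) : Prop :=
  forall (eps : R) (B : set T), 0 < eps -> measurable B -> (mu B < +oo)%E ->
  forall delta : R, 0 < delta ->
    ev_net le (fun a => (mu (B `&` [set t | (eps <= `|x a t - f t|)%R]) < delta%:E)%E).

(* basic zero-neighbourhoods of the topology of local convergence in measure *)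
Definition lm_U (B : set T) (eps : R) (g : T -> R) : Prop :=
  (mu (B `&` [set t | (eps <= `|g t|)%R]) < eps%:E)%E.

Definition lm_nbhd (f : T -> R) (V : set (T -> R)) : Prop :=
  exists (B : set T) (eps : R),
    [/\ measurable B, (mu B < +oo)%E, 0 < eps &
        forall g, L0sf g -> lm_U B eps (fun t => g t - f t) -> V g].

Definition lm_tconv (A : Type) (le : A -> A -> Prop)
    (x : A -> T -> R) (f : T -> R) : Prop :=
  forall V, lm_nbhd f V -> ev_net le (fun a => V (x a)).

Definition solid_E (W : set (T -> R)) : Prop :=
  forall g h, L0sf g -> L0sf h -> W h -> ale (fun t => `|g t|) (fun t => `|h t|) -> W g.

Definition lm_is_uo_Lebesgue : Prop :=
  [/\
      (forall f g, L0sf f -> L0sf g -> ~ aeq f g ->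
         exists V W, [/\ lm_nbhd f V, lm_nbhd g W &
                         forall h, L0sf h -> V h -> W h -> False]),
      (forall f g, L0sf f -> L0sf g -> forall V, lm_nbhd (fun t => f t + g t) V ->
         exists V1 V2, [/\ lm_nbhd f V1, lm_nbhd g V2 &
           forall h1 h2, L0sf h1 -> L0sf h2 -> V1 h1 -> V2 h2 ->
             V (fun t => h1 t + h2 t)]),
      (forall (c : R) f, L0sf f -> forall V, lm_nbhd (fun t => c * f t) V ->
         exists (e : R) W, [/\ 0 < e, lm_nbhd f W &
           forall (c' : R) h, `|c' - c| < e -> L0sf h -> W h ->
             V (fun t => c' * h t)]),
      (forall V, lm_nbhd (fun _ => 0) V ->
         exists W, [/\ lm_nbhd (fun _ => 0) W, solid_E W &
                       forall h, L0sf h -> W h -> V h]) &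
      (forall (A : Type) (le : A -> A -> Prop) (x : A -> T -> R) (f : T -> R),
         directed le -> (forall a, L0sf (x a)) -> L0sf f ->
         uo_conv le x f -> lm_tconv le x f)].

End Meas.

(* Main.v *)
Require Import Defs.
From HB Require Import structures.
From mathcomp Require Import all_boot all_order all_algebra.
From mathcomp Require Import all_classical all_reals all_analysis.
From mathcomp.algebra_tactics Require Import ring lra.
Import Order.TTheory GRing.Theory Num.Theory numFieldNormedType.Exports.
Set Implicit Arguments. Unset Strict Implicit. Unset Printing Implicit Defensive.
Local Open Scope classical_set_scope.
Local Open Scope ring_scope.

Section P1.
Context {d : measure_display} {T : measurableType d} {R : realType}.
Variable mu : {measure set T -> \bar R}.
Implicit Types (f g h : T -> R).

Lemma mset_le f g : measurable_fun setT f -> measurable_fun setT g ->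
  measurable [set t | f t <= g t].
Proof.
move=> mf mg; have := measurable_realfun.measurable_fun_ler mf mg measurableT (Y := [set true]) I.
by rewrite setTI; congr measurable; apply/seteqP; split => t /=.
Qed.

Lemma mset_lt f g : measurable_fun setT f -> measurable_fun setT g ->
  measurable [set t | f t < g t].
Proof.
move=> mf mg; have := measurable_realfun.measurable_fun_ltr mf mg measurableT (Y := [set true]) I.
by rewrite setTI; congr measurable; apply/seteqP; split => t /=.
Qed.

Lemma mfabs f : measurable_fun setT f -> measurable_fun setT (fun t => `|f t|).
Proof. by move=> mf; apply: measurableT_comp. Qed.

Lemma mfB f g : measurable_fun setT f -> measurable_fun setT g ->
  measurable_fun setT (fun t => f t - g t).
Proof. by move=> mf mg; apply: measurable_realfun.measurable_funB. Qed.

Lemma mfD f g : measurable_fun setT f -> measurable_fun setT g ->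
  measurable_fun setT (fun t => f t + g t).
Proof. by move=> mf mg; apply: measurable_realfun.measurable_funD. Qed.

Lemma mfM f g : measurable_fun setT f -> measurable_fun setT g ->
  measurable_fun setT (fun t => f t * g t).
Proof. by move=> mf mg; apply: measurable_realfun.measurable_funM. Qed.

Lemma mset_ge_abs (eps : R) f : measurable_fun setT f ->
  measurable [set t | eps <= `|f t|].
Proof. by move=> mf; apply: mset_le => //; exact: mfabs. Qed.

Lemma mset_neq0 f : measurable_fun setT f -> measurable [set t | f t != 0].
Proof.
move=> mf; rewrite (_ : [set t | f t != 0] = ~` [set t | `|f t| <= 0]).
  by apply: measurableC; apply: mset_le => //; exact: mfabs.
apply/seteqP; split => t /=.
  by move=> ft0; rewrite normr_le0; apply/negP; rewrite ft0.
by move/negP; rewrite normr_le0.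
Qed.

Lemma ae_negl (N : set T) (P : T -> Prop) : mu.-negligible N ->
  (forall t, ~ N t -> P t) -> {ae mu, forall t, P t}.
Proof.
move=> NN HP; apply: negligibleS NN => t /= nPt.
by apply: contrapT => Nt; apply: nPt; exact: HP.
Qed.

Lemma ae_neglP (P : T -> Prop) : {ae mu, forall t, P t} ->
  mu.-negligible [set t | ~ P t].
Proof. by []. Qed.

Lemma fin_cover (F : nat -> set T) :
  (forall n, measurable (F n) /\ (mu (F n) < +oo)%E) ->
  exists G : nat -> set T, [/\ (forall n, measurable (G n)),
    (forall n, (mu (G n) < +oo)%E), (forall n m, (n <= m)%N -> G n `<=` G m)
    & \bigcup_n G n = \bigcup_n F n].
Proof.
move=> HF.
have : sigma_finite (\bigcup_n F n) mu by exists F.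
move=> /sigma_finiteP [G [UG ndG mG]]; exists G; split.
- by move=> n; case: (mG n).
- by move=> n; case: (mG n).
- by move=> n m nm; apply/subsetPset; exact: ndG.
- by [].
Qed.

Lemma sfs_cover f : sigma_finite_support mu f ->
  exists G : nat -> set T, [/\ (forall n, measurable (G n)),
    (forall n, (mu (G n) < +oo)%E), (forall n m, (n <= m)%N -> G n `<=` G m)
    & mu.-negligible ([set t | f t != 0] `\` \bigcup_n G n)].
Proof.
move=> [F [HF HN]]; have [G [mG fG ndG UG]] := fin_cover HF.
by exists G; split => //; rewrite UG.
Qed.

Lemma sfs_sub f g h : sigma_finite_support mu f -> sigma_finite_support mu g ->
  (forall t, h t != 0 -> f t != 0 \/ g t != 0) -> sigma_finite_support mu h.
Proof.
move=> [F [HF NF]] [G [HG NG]] hfg.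
exists (fun n => F n `|` G n); split.
  move=> n; have [mF fF] := HF n; have [mG fG] := HG n.
  split; first exact: measurableU.
  rewrite (le_lt_trans (measureU2 _ _ _))//.
  by rewrite lte_add_pinfty.
apply: negligibleS (negligibleU NF NG) => t /= [ht0 nU].
case: (hfg t ht0) => H; [left|right]; split => // -[n _ Hn]; apply: nU;
  exists n => //; [left|right].
 all: by [].
Qed.

Lemma sfs_le f h : sigma_finite_support mu f ->
  (forall t, h t != 0 -> f t != 0) -> sigma_finite_support mu h.
Proof. by move=> sf hf; apply: (sfs_sub sf sf) => t /hf; left. Qed.

Lemma sfs0 : sigma_finite_support mu (fun _ => 0).
Proof.
exists (fun _ => set0); split.
  by move=> n; split => //; rewrite measure0.
apply: negligibleS (negligible_set0 mu) => t [] /=; by rewrite eqxx.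
Qed.

Lemma L0sf0 : L0sf mu (fun _ => 0).
Proof. by split; [exact: measurable_cst|exact: sfs0]. Qed.

Lemma L0sfD f g : L0sf mu f -> L0sf mu g -> L0sf mu (fun t => f t + g t).
Proof.
move=> [mf sf] [mg sg]; split; first exact: mfD.
apply: (sfs_sub sf sg) => t; case: (eqVneq (f t) 0) => [->|]; last by left.
by rewrite add0r; right.
Qed.

Lemma L0sfM c f : L0sf mu f -> L0sf mu (fun t => c * f t).
Proof.
move=> [mf sf]; split; first by apply: mfM => //; exact: measurable_cst.
by apply: (sfs_le sf) => t; rewrite mulf_eq0 negb_or => /andP[].
Qed.

Lemma L0sfB f g : L0sf mu f -> L0sf mu g -> L0sf mu (fun t => f t - g t).
Proof.
move=> Lf Lg; have := L0sfD Lf (L0sfM (-1) Lg).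
by congr L0sf; apply: funext => t; rewrite mulN1r.
Qed.

Lemma L0sf_ind (B : set T) : measurable B -> (mu B < +oo)%E ->
  L0sf mu (\1_B : T -> R).
Proof.
move=> mB fB; split; first exact: measurable_realfun.measurable_indic.
exists (fun _ => B); split => // .
apply: negligibleS (negligible_set0 mu) => t /= [].
rewrite indicE; case: (boolP (t \in B)) => [/set_mem Bt _|]; last by rewrite eqxx.
by case; exists 0%N.
Qed.

End P1.

Section P2.
Context {d : measure_display} {T : measurableType d} {R : realType}.
Variable mu : {measure set T -> \bar R}.
Implicit Types (f g h : T -> R).

Definition ep (n : nat) : R := 1 / (2 ^ n.+1)%:R.

Lemma ep_gt0 n : 0 < ep n.
Proof. by rewrite /ep divr_gt0// ltr0n expn_gt0. Qed.

Lemma ep_le n : ep n <= n.+1%:R^-1.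
Proof.
rewrite /ep div1r lef_pV2 ?posrE ?ltr0n ?expn_gt0//.
by rewrite ler_nat ltnW// ltn_expl.
Qed.

Lemma ep_small (e : R) : 0 < e -> \forall n \near \oo, ep n < e.
Proof.
move=> e0; near=> n; apply: (le_lt_trans (ep_le n)).
by near: n; exact: (near_infty_natSinv_lt (PosNum e0)).
Unshelve. all: by end_near. Qed.

Lemma near_oo_ex (P : nat -> Prop) : (\forall n \near \oo, P n) ->
  exists N, forall n, (N <= n)%N -> P n.
Proof. by move=> [N _ HN]; exists N => n Nn; apply: HN. Qed.

Lemma ae_lm (y : nat -> T -> R) f : (forall n, measurable_fun setT (y n)) ->
  measurable_fun setT f ->
  {ae mu, forall t, (fun n => y n t) @ \oo --> f t} -> lm_conv mu natle y f.
Proof.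
move=> my mf ae eps B eps0 mB fB delta delta0.
pose S n := [set t | eps <= `|y n t - f t|].
have mS n : measurable (S n) by apply: mset_ge_abs; apply: mfB.
pose E N := B `&` \bigcup_(n in [set n | (N <= n)%N]) S n.
have mE N : measurable (E N).
  by apply: measurableI => //; apply: bigcup_measurable => n _; exact: mS.
have mcE : measurable (\bigcap_N E N) by apply: bigcapT_measurable.
have niE : nonincreasing_seq E.
  move=> m n mn; apply/subsetPset => t [Bt [k /= mk Skt]]; split => //.
  by exists k => //=; rewrite (leq_trans mn).
have E0 : (mu (E 0%N) < +oo)%E.
  by rewrite (le_lt_trans _ fB)// le_measure// ?inE//; apply: subIsetl.
have cvE := nonincreasing_cvg_mu E0 mE mcE niE.
have cE0 : mu (\bigcap_N E N) = 0%E.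
  apply: measure_negligible => //; apply: negligibleS ae => t /= Et cvt.
  move/cvgrPdist_lt : cvt => /(_ eps eps0) /near_oo_ex [N HN].
  have [_ [k /= Nk Skt]] := Et N I; have := HN k Nk.
  by rewrite distrC ltNge Skt.
rewrite cE0 in cvE.
have : \forall N \near \oo, (mu (E N) < delta%:E)%E.
  move/fine_cvgP : cvE => [finE cvE'].
  have H := @cvgr_lt R nat \oo _ _ 0 cvE' delta delta0.
  apply: filterS2 finE (H eventually_filter) => N fN lN.
  by move: lN fN => /=; case: (mu (E N)) => // r; rewrite lte_fin.
move/near_oo_ex => [N HN]; exists N => n Nn.
rewrite (le_lt_trans _ (HN N (leqnn N)))// le_measure// ?inE//.
- by apply: measurableI => //; exact: mS.
- by move=> t [Bt St]; split => //; exists n.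
Qed.

Lemma diag (y : nat -> T -> R) f (G : nat -> set T) :
  (forall n, measurable_fun setT (y n)) -> measurable_fun setT f ->
  (forall n, measurable (G n)) ->
  (forall n, (mu (G n `&` [set t | (ep n <= `|y n t - f t|)%R]) < (ep n)%:E)%E) ->
  {ae mu, forall t, (f t != 0 \/ exists k, y k t != 0) ->
     exists N, forall n, (N <= n)%N -> G n t} ->
  {ae mu, forall t, (fun n => y n t) @ \oo --> f t}.
Proof.
move=> my mf mG HD cov.
pose D n := G n `&` [set t | ep n <= `|y n t - f t|].
have mD n : measurable (D n).
  by apply: measurableI => //; apply: mset_ge_abs; apply: mfB.
have sumD : (\sum_(n <oo) mu (D n) < +oo)%E.
  apply: (@le_lt_trans _ _ (\sum_(n <oo) ((1:R) / (2 ^ n.+1)%:R)%:E)%E).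
    apply: lee_nneseries => n _ //; exact: ltW (HD n).
  by rewrite (le_lt_trans (epsilon_trick0 _ _))// ltry.
have BC := lim_sup_set_cvg0 mD sumD.
have nBC : {ae mu, forall t, ~ lim_sup_set D t}.
  have mL : measurable (lim_sup_set D).
    by apply: bigcapT_measurable => k; apply: bigcup_measurable => j _.
  apply: (@ae_negl _ _ _ mu (lim_sup_set D)); first exact/negligibleP.
  by move=> t.
apply: filterS2 cov nBC => t ct nlt.
have [H|Hne] := pselect (f t != 0 \/ exists k, y k t != 0); last first.
  have f0 : f t = 0 by apply: contrapT => H; apply: Hne; left; apply/eqP.
  have y0 k : y k t = 0 by apply: contrapT => H; apply: Hne; right; exists k; apply/eqP.
  rewrite f0; under eq_fun do rewrite y0; exact: cvg_cst.
have [N1 HN1] := ct H.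
have [N2 HN2] : exists N2, forall j, (N2 <= j)%N -> ~ D j t.
  apply: contrapT => K; apply: nlt => N _; apply: contrapT => K2; apply: K.
  exists N; move=> j Nj Dj; apply: K2; exists j => //.
apply/cvgrPdist_lt => e e0; near=> n.
have nD := HN2 n (_ : (N2 <= n)%N); have Gn := HN1 n (_ : (N1 <= n)%N).
rewrite distrC; apply: (@lt_trans _ _ (ep n)); last by near: n; exact: ep_small.
rewrite ltNge; apply/negP => Hle; apply: nD; first by near: n; exists N2.
split => //; apply: Gn; by near: n; exists N1.
Unshelve. all: by end_near. Qed.

End P2.

Section P3.
Context {d : measure_display} {T : measurableType d} {R : realType}.
Variable mu : {measure set T -> \bar R}.
Implicit Types (f g h : T -> R).

Definition CovP (g : T -> R) (G : nat -> set T) :=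
  [/\ (forall n, measurable (G n)), (forall n, (mu (G n) < +oo)%E),
    (forall n m, (n <= m)%N -> G n `<=` G m)
    & mu.-negligible ([set t | g t != 0] `\` \bigcup_n G n)].

Lemma cov_ex : exists cov : (T -> R) -> nat -> set T,
  forall g, L0sf mu g -> CovP g (cov g).
Proof.
have H : forall g, exists G, L0sf mu g -> CovP g G.
  move=> g; have [[mg sg]|nL] := pselect (L0sf mu g); last first.
    by exists (fun _ => set0).
  by have [G HG] := sfs_cover sg; exists G.
by have [cov Hcov] := choice H; exists cov.
Qed.

Lemma CovP_ae g G : CovP g G ->
  {ae mu, forall t, g t != 0 -> exists j, G j t}.
Proof.
move=> [_ _ _ N]; apply: (@ae_negl _ _ _ mu _ _ N) => t Nt gt0.
by apply: contrapT => K; apply: Nt; split => // -[j _ Gj]; apply: K; exists j.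
Qed.

Lemma net_embedded (A : Type) (le : A -> A -> Prop) (x : A -> T -> R) f :
  directed le -> (forall a, L0sf mu (x a)) -> L0sf mu f -> lm_conv mu le x f ->
  exists alpha : nat -> A, embedded le alpha /\
    {ae mu, forall t, (fun n => x (alpha n) t) @ \oo --> f t}.
Proof.
move=> [[a_init _] [refl [trans dir]]] Lx Lf lmc.
have [cov Hcov] := cov_ex.
pose NoLargest := ~ exists a, forall b, le b a.
have Hnxt : forall p : A * set T * nat, exists b,
    [/\ le p.1.1 b, NoLargest -> ~ le b p.1.1 &
       (measurable p.1.2 -> (mu p.1.2 < +oo)%E ->
        (mu (p.1.2 `&` [set t | (ep p.2 <= `|x b t - f t|)%R]) < (ep p.2)%:E)%E)].
  move=> [[a G] n] /=.
  have [a0 Ha0] : exists a0, forall b, le a0 b -> measurable G ->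
      (mu G < +oo)%E ->
      (mu (G `&` [set t | (ep n <= `|x b t - f t|)%R]) < (ep n)%:E)%E.
    have [[mG fG]|nG] := pselect (measurable G /\ (mu G < +oo)%E); last first.
      by exists a => b _ mG fG; exfalso; apply: nG.
    have [a0 Ha0] := lmc (ep n) G (ep_gt0 n) mG fG (ep n) (ep_gt0 n).
    by exists a0 => b /Ha0.
  have [c [ac a0c]] := dir a a0.
  have [NL|L] := pselect NoLargest; last first.
    exists c; split; [exact: ac|move=> NL; exfalso; exact: L NL|exact: Ha0].
  have [e nea] : exists e, ~ le e a.
    apply: contrapT => K; apply: NL; exists a => b.
    by apply: contrapT => K2; apply: K; exists b.
  have [b [cb eb]] := dir c e.
  exists b; split.
  - exact: trans ac cb.
  - by move=> _ ba; apply: nea; exact: trans eb ba.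
  - by apply: Ha0; exact: trans a0c cb.
have [nxt Hn] := choice Hnxt.
pose Gf := cov f.
pose st := fix st (n : nat) : A * (nat -> set T) :=
  match n with
  | 0%N => let a := nxt (a_init, Gf 0%N, 0%N) in (a, cov (x a))
  | m.+1 => let aK := st m in
      let b := nxt (aK.1, Gf m.+1 `|` aK.2 m.+1, m.+1) in
      (b, fun j => aK.2 j `|` cov (x b) j)
  end.
pose alpha n := (st n).1.
pose K n := (st n).2.
pose G n := match n with 0%N => Gf 0%N | m.+1 => Gf m.+1 `|` K m m.+1 end.
have alpha0 : alpha 0%N = nxt (a_init, G 0%N, 0%N) by [].
have alphaS n : alpha n.+1 = nxt (alpha n, G n.+1, n.+1) by [].
have K0 : K 0%N = cov (x (alpha 0%N)) by [].
have KS n j : K n.+1 j = K n j `|` cov (x (alpha n.+1)) j by [].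
have HGf := Hcov f Lf.
have Hcx k := Hcov _ (Lx (alpha k)).
have mK n j : measurable (K n j) /\ (mu (K n j) < +oo)%E.
  elim: n => [|n [IH1 IH2]]; first by rewrite K0; case: (Hcx 0%N).
  rewrite KS; have [mc fc _ _] := Hcx n.+1; split; first exact: measurableU.
  by rewrite (le_lt_trans (measureU2 mu IH1 (mc j)))//; apply: lte_add_pinfty; [exact: IH2|exact: fc].
have mG n : measurable (G n) /\ (mu (G n) < +oo)%E.
  have [mf ff _ _] := HGf.
  case: n => [|n] /=; first by [].
  have [mK1 fK1] := mK n n.+1; split; first exact: measurableU.
  by rewrite (le_lt_trans (measureU2 mu (mf n.+1) mK1))//; apply: lte_add_pinfty; [exact: ff|exact: fK1].
have covK k n j : (k <= n)%N -> cov (x (alpha k)) j `<=` K n j.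
  elim: n => [|n IH]; first by rewrite leqn0 => /eqP ->; rewrite K0.
  rewrite leq_eqVlt => /orP[/eqP ->|kn]; first by rewrite KS => t Ht; right.
  by rewrite KS => t Ht; left; apply: IH.
exists alpha; split.
  split.
    by move=> n; rewrite alphaS; case: (Hn (alpha n, G n.+1, n.+1)).
  move=> NL n; rewrite alphaS; case: (Hn (alpha n, G n.+1, n.+1)) => /= ? H _.
  by split => //; apply: H.
apply: (@diag _ _ _ mu _ _ G).
- by move=> n; case: (Lx (alpha n)).
- by case: Lf.
- by move=> n; case: (mG n).
- move=> n; have [mGn fGn] := mG n.
  case: n mGn fGn => [|n] mGn fGn.
    by rewrite alpha0; case: (Hn (a_init, G 0%N, 0%N)) => _ _ /(_ mGn fGn).
  by rewrite alphaS; case: (Hn (alpha n, G n.+1, n.+1)) => _ _ /(_ mGn fGn).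
- have aef := CovP_ae HGf.
  have aex : {ae mu, forall t, forall k, x (alpha k) t != 0 ->
      exists j, cov (x (alpha k)) j t}.
    by apply: ae_foralln => k; exact: CovP_ae (Hcx k).
  apply: filterS2 aef aex => t Hf Hx [/Hf [j Hj]|[k /Hx [j Hj]]].
    exists j => n jn; have [_ _ ndf _] := HGf.
    case: n jn => [|n] jn /=; first by move: jn; rewrite leqn0 => /eqP <-.
    by left; apply: ndf Hj.
  exists (maxn k.+1 j) => n; rewrite geq_max => /andP[kn jn].
  case: n kn jn => [//|n] kn jn /=; right.
  apply: (covK k n n.+1) => //.
  by have [_ _ ndc _] := Hcx k; apply: ndc Hj.
Qed.

End P3.

Section P4.
Context {d : measure_display} {T : measurableType d} {R : realType}.
Variable mu : {measure set T -> \bar R}.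
Implicit Types (f g h : T -> R).

Lemma part1 (A : Type) (le : A -> A -> Prop) (x : A -> T -> R) (f : T -> R) :
  directed le -> (forall a, L0sf mu (x a)) -> L0sf mu f ->
  lm_conv mu le x f ->
  exists alpha : nat -> A,
    [/\ embedded le alpha,
        {ae mu, forall t, (fun n => x (alpha n) t) @ \oo --> f t} &
        lm_conv mu natle (fun n => x (alpha n)) f].
Proof.
move=> dir Lx Lf lmc; have [alpha [emb ae]] := net_embedded dir Lx Lf lmc.
exists alpha; split => //; apply: ae_lm => //.
- by move=> n; case: (Lx (alpha n)).
- by case: Lf.
Qed.

Lemma directed_nat : directed natle.
Proof.
split; first by exists 0%N.
split; first by move=> a; exact: leqnn.
split; first by move=> a b c; exact: leq_trans.
by move=> a b; exists (maxn a b); rewrite /natle leq_maxl leq_maxr.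
Qed.

Lemma homo_ge (phi : nat -> nat) : {homo phi : m n / (m < n)%N} ->
  forall n, (n <= phi n)%N.
Proof.
move=> hphi; elim => [//|n IH].
by apply: leq_ltn_trans IH _; apply: hphi.
Qed.

Lemma part2 (x : nat -> T -> R) (f : T -> R) :
  (forall n, L0sf mu (x n)) -> L0sf mu f ->
  (lm_conv mu natle x f <->
   forall phi : nat -> nat, {homo phi : m n / (m < n)%N} ->
     exists psi : nat -> nat, {homo psi : m n / (m < n)%N} /\
       {ae mu, forall t, (fun n => x (phi (psi n)) t) @ \oo --> f t}).
Proof.
move=> Lx Lf; split.
  move=> lmc phi hphi.
  have lmc' : lm_conv mu natle (fun n => x (phi n)) f.
    move=> eps B eps0 mB fB delta delta0.
    have [N HN] := lmc eps B eps0 mB fB delta delta0.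
    exists N => n Nn; apply: HN; exact: leq_trans Nn (homo_ge hphi n).
  have [alpha [[st1 st2] ae]] :=
    net_embedded directed_nat (fun n => Lx (phi n)) Lf lmc'.
  exists alpha; split => //.
  apply: homo_ltn; first by move=> ? ? ?; exact: ltn_trans.
  move=> i; have NL : ~ (exists a : nat, forall b : nat, natle b a).
    by move=> [a Ha]; have := Ha a.+1; rewrite /natle ltnn.
  have [_ H] := st2 NL i.
  by rewrite ltnNge; apply/negP.
move=> Hsub eps B eps0 mB fB delta delta0.
pose P n := (mu (B `&` [set t | (eps <= `|x n t - f t|)%R]) < delta%:E)%E.
apply: contrapT => nev.
have Hh : forall N, exists n, (N <= n)%N /\ ~ P n.
  move=> N; apply: contrapT => K; apply: nev; exists N => n Nn.
  by apply: contrapT => K2; apply: K; exists n.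
have [h Hh'] := choice Hh.
pose phi := fix phi n := match n with 0%N => h 0%N | m.+1 => h (phi m).+1 end.
have hphi : {homo phi : m n / (m < n)%N}.
  apply: (@homo_ltn _ phi (fun a b => (a < b)%N)); first by move=> ? ? ?; exact: ltn_trans.
  by move=> i /=; have [] := Hh' (phi i).+1.
have nP n : ~ P (phi n).
  by case: n => [|n] /=; [have [] := Hh' 0%N|have [] := Hh' (phi n).+1].
have [psi [hpsi ae]] := Hsub phi hphi.
have lm := ae_lm (fun n => (Lx (phi (psi n))).1) Lf.1 ae.
have [N HN] := lm eps B eps0 mB fB delta delta0.
by apply: (nP (psi N)); apply: HN; exact: leqnn.
Qed.

Lemma part_tconv (A : Type) (le : A -> A -> Prop) (x : A -> T -> R) (f : T -> R) :
  directed le -> (forall a, L0sf mu (x a)) -> L0sf mu f ->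
  (lm_tconv mu le x f <-> lm_conv mu le x f).
Proof.
move=> dir Lx Lf; split.
  move=> tc eps B eps0 mB fB delta delta0.
  pose e := Num.min eps delta.
  have e0 : 0 < e by rewrite lt_min eps0 delta0.
  pose V := fun g => lm_U mu B e (fun t => g t - f t).
  have [a0 Ha0] : ev_net le (fun a => V (x a)).
    by apply: tc; exists B, e; split.
  exists a0 => a /Ha0; rewrite /V /lm_U => H.
  apply: le_lt_trans (lt_le_trans H _).
    rewrite le_measure ?inE//.
    - by apply: measurableI => //; apply: mset_ge_abs; apply: mfB;
        [case: (Lx a)|case: Lf].
    - by apply: measurableI => //; apply: mset_ge_abs; apply: mfB;
        [case: (Lx a)|case: Lf].
    - by move=> t [Bt /= Ht]; split => //=; apply: le_trans Ht; rewrite ge_min lexx.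
  by rewrite lee_fin ge_min lexx orbT.
move=> lmc V [B [eps [mB fB eps0 HV]]].
have [a0 Ha0] := lmc eps B eps0 mB fB eps eps0.
exists a0 => a /Ha0 H; apply: HV; first exact: Lx.
exact: H.
Qed.

End P4.

Section P5.
Context {d : measure_display} {T : measurableType d} {R : realType}.
Variable mu : {measure set T -> \bar R}.
Implicit Types (f g h : T -> R).

Lemma ess_union (I : Type) (S : set I) (i0 : I) (G : set T) (Af : I -> set T) :
  S i0 -> measurable G -> (mu G < +oo)%E -> (forall i, S i -> measurable (Af i)) ->
  exists c : nat -> I, (forall k, S (c k)) /\
    forall i, S i -> mu (G `&` Af i `\` \bigcup_k Af (c k)) = 0%E.
Proof.
move=> Si0 mG fG mA.
pose val (c : nat -> I) := mu (G `&` \bigcup_k Af (c k)).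
have mU (c : nat -> I) : (forall k, S (c k)) -> measurable (G `&` \bigcup_k Af (c k)).
  move=> Sc; apply: measurableI => //; apply: bigcup_measurable => k _.
  exact: mA.
pose V := [set val c | c in [set c : nat -> I | forall k, S (c k)]].
pose M := ereal_sup V.
have valleG (c : nat -> I) : (forall k, S (c k)) -> (val c <= mu G)%E.
  by move=> Sc; apply: le_measure; rewrite ?inE//; (try exact: mU); exact: subIsetl.
have M_le : (M <= mu G)%E by apply: ub_ereal_sup => _ [c Sc <-]; exact: valleG.
have valleM (c : nat -> I) : (forall k, S (c k)) -> (val c <= M)%E.
  by move=> Sc; apply: ereal_sup_ubound; exists c.
have M_ge0 : (0 <= M)%E.
  by apply: le_trans (measure_ge0 mu _) (valleM (fun _ => i0) (fun _ => Si0)).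
have Mfin : M \is a fin_num by rewrite ge0_fin_numE // (le_lt_trans M_le fG).
have Hm m : exists c, (forall k, S (c k)) /\ (M - (m.+1%:R^-1)%:E < val c)%E.
  have e0 : (0 : R) < m.+1%:R^-1 by rewrite invr_gt0 ltr0n.
  have [_ [c Sc <-] H] := @ub_ereal_sup_adherent R V _ e0 Mfin.
  by exists c.
have [cs Hcs] := choice Hm.
pose c' n := match (unpickle n : option (nat * nat)) with
  | Some (m, k) => cs m k | None => i0 end.
have Sc' n : S (c' n).
  by rewrite /c'; case: (unpickle n) => [[m k]|//]; case: (Hcs m) => + _; apply.
have sub m : \bigcup_k Af (cs m k) `<=` \bigcup_n Af (c' n).
  by move=> t [k _ H]; exists (pickle (m, k)) => //; rewrite /c' pickleK.
have valc' : val c' = M.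
  apply/eqP; rewrite eq_le valleM //=; apply/lee_subgt0Pr => e e0.
  have [m Hm'] := near_oo_ex (near_infty_natSinv_lt (PosNum e0)).
  have [_ Hv] := Hcs m.
  apply: (@le_trans _ _ (M - (m.+1%:R^-1)%:E)%E).
    by rewrite leeB// lee_fin ltW// Hm'.
  apply: le_trans (ltW Hv) _.
  by apply: le_measure; rewrite ?inE//; [apply: mU; case: (Hcs m)|
    apply: mU|apply: setIS; exact: sub].
move=> {Hm Hcs}.
exists c'; split => // i Si.
pose c'' n := match n with 0%N => i | k.+1 => c' k end.
have Sc'' n : S (c'' n) by case: n.
have := valleM c'' Sc''.
have -> : val c'' = (val c' + mu (G `&` Af i `\` \bigcup_k Af (c' k)))%E.
  rewrite /val -measureU//; first (congr (mu _); apply/seteqP; split).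
  - move=> t [Gt [[|k] _ /= H]].
      by have [[n _ Hn]|nU] := pselect ((\bigcup_k Af (c' k)) t);
        [left; split => //; exists n|right].
    by left; split => //; exists k.
  - move=> t [[Gt [k _ H]]|[[Gt H] _]]; split => //.
      by exists k.+1.
    by exists 0%N.
  - exact: mU.
  - apply: measurableD; first by apply: measurableI => //; exact: mA.
    by apply: bigcupT_measurable => k; exact: mA.
  - by apply/seteqP; split => t // [[_ H] [_ H2]].
rewrite valc' => H.
apply/eqP; rewrite eq_le measure_ge0 andbT.
by rewrite -(leeD2lE _ _ Mfin) adde0.
Qed.

End P5.

Section P6.
Context {d : measure_display} {T : measurableType d} {R : realType}.
Variable mu : {measure set T -> \bar R}.
Implicit Types (f g h : T -> R).

Lemma ae_forall_count (I : countType) (P : I -> T -> Prop) :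
  (forall i, {ae mu, forall t, P i t}) -> {ae mu, forall t, forall i, P i t}.
Proof.
move=> H.
pose Q := fun n t => match (unpickle n : option I) with Some i => P i t | None => True end.
have HQ : forall n, {ae mu, forall t, Q n t}.
  move=> n; rewrite /Q; case: (unpickle n) => [i|]; first exact: H.
  exact: aeW.
apply: filterS (ae_foralln HQ) => t Ht i.
by have := Ht (pickle i); rewrite /Q pickleK.
Qed.

Lemma ae_and (P Q : T -> Prop) : {ae mu, forall t, P t} ->
  {ae mu, forall t, Q t} -> {ae mu, forall t, P t /\ Q t}.
Proof. by move=> HP HQ; apply: filterS2 HP HQ => t; split. Qed.

Lemma csp : countable_sup_property mu.
Proof.
move=> S s SE [Ls [ubS lubS]].
have [[g0 Sg0]|nS] := pselect (exists g, S g); last first.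
  have S0 : S = set0 by apply/seteqP; split => g // Sg; apply: nS; exists g.
  by exists S; split; [by []|rewrite S0; exact: countable0|split].
have [covs Hs] := sfs_cover Ls.2.
have [covg Hg] := sfs_cover (SE _ Sg0).2.
pose Gn n := covs n `|` covg n.
have mGn n : measurable (Gn n) /\ (mu (Gn n) < +oo)%E.
  have [ms fs _ _] := Hs; have [mg fg _ _] := Hg.
  split; first exact: measurableU.
  rewrite (le_lt_trans (measureU2 mu (ms n) (mg n)))//.
  by apply: lte_add_pinfty; [exact: fs|exact: fg].
have mlt (q : rat) g : S g -> measurable [set t | ratr q < g t].
  by move=> Sg; apply: mset_lt; [exact: measurable_cst|case: (SE g Sg)].
have H : forall p : rat * nat, exists c : nat -> (T -> R), (forall k, S (c k)) /\
    forall g, S g -> mu (Gn p.2 `&` [set t | ratr p.1 < g t] `\`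
      \bigcup_k [set t | ratr p.1 < c k t]) = 0%E.
  move=> [q n] /=; have [mG fG] := mGn n.
  by apply: (ess_union Sg0) => // g Sg; exact: mlt.
have [cc Hcc] := choice H.
pose F (o : option ((rat * nat) * nat)) :=
  match o with None => g0 | Some (p, k) => cc p k end.
have SF w : S (F w).
  by case: w => [[p k]|//] /=; case: (Hcc p) => + _; apply.
exists (F @` setT); split.
    by move=> _ [w _ <-].
  by apply: sub_countable (card_image_le F setT) _; exact: countableP.
split => //; split.
  by move=> _ [w _ <-]; apply: ubS.
move=> u Lu ubu; apply: lubS => // g Sg.
have A1 : {ae mu, forall t, forall i, F (Some i) t <= u t}.
  by apply: ae_forall_count => i; apply: ubu; exists (Some i).
have A2 : {ae mu, forall t, g0 t <= u t} by apply: ubu; exists None.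
have A3 : {ae mu, forall t, g t <= s t} by apply: ubS.
have A4 := CovP_ae Hs.
have A5 := CovP_ae Hg.
have A6 : {ae mu, forall t, forall p : rat * nat,
    ~ (Gn p.2 t /\ ratr p.1 < g t /\ ~ exists k, ratr p.1 < cc p k t)}.
  apply: ae_forall_count => -[q n] /=.
  have [mG fG] := mGn n; have [Scc Hz] := Hcc (q, n).
  have mD : measurable (Gn n `&` [set t | ratr q < g t] `\`
      \bigcup_k [set t | ratr q < cc (q, n) k t]).
    apply: measurableD; first by apply: measurableI => //; exact: mlt.
    by apply: bigcup_measurable => k _; exact: mlt.
  apply: (@ae_negl _ _ _ mu _ _ ((negligibleP mu mD).2 (Hz g Sg))).
  move=> t nD [Gt [lt nex]]; apply: nD; split => //.
  by move=> [k _ Hk]; apply: nex; exists k.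
have := ae_and A1 (ae_and A2 (ae_and A3 (ae_and A4 (ae_and A5 A6)))).
apply: filterS => t [h1 [h2 [h3 [h4 [h5 h6]]]]].
have [Hne|Hz] := pselect (s t != 0 \/ g0 t != 0); last first.
  have st0 : s t = 0 by apply: contrapT => K; apply: Hz; left; apply/eqP.
  have gt0 : g0 t = 0 by apply: contrapT => K; apply: Hz; right; apply/eqP.
  by rewrite (le_trans h3)// st0 -gt0.
have [j Gj] : exists j, Gn j t.
  case: Hne => [/h4 [j Hj]|/h5 [j Hj]]; exists j; [left|right]; exact: Hj.
rewrite leNgt; apply/negP => ugt.
have [q] := rat_in_itvoo ugt; rewrite in_itv /= => /andP[uq qg].
have [k Hk] : exists k, ratr q < cc (q, j) k t.
  apply: contrapT => K; apply: (h6 (q, j)); split => //.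
have := h1 ((q, j), k); rewrite /= => cu.
by have := lt_le_trans Hk cu; rewrite ltNge (ltW uq).
Qed.

End P6.

Section P7.
Context {d : measure_display} {T : measurableType d} {R : realType}.
Variable mu : {measure set T -> \bar R}.
Implicit Types (f g h : T -> R).

Lemma le_measure_ae (A B : set T) : measurable A -> measurable B ->
  {ae mu, forall t, A t -> B t} -> (mu A <= mu B)%E.
Proof.
move=> mA mB [N [mN N0 sN]].
apply: (@le_trans _ _ (mu (B `|` N))).
  apply: le_measure; rewrite ?inE//; first exact: measurableU.
  move=> t At; have [Bt|nBt] := pselect (B t); [by left|right].
  by apply: sN => K; exact: nBt (K At).
by rewrite (measureU0 mB mN N0).
Qed.

Lemma le_measureU_ae (A B C : set T) : measurable A -> measurable B ->
  measurable C -> {ae mu, forall t, A t -> B t \/ C t} ->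
  (mu A <= mu B + mu C)%E.
Proof.
move=> mA mB mC H; apply: (@le_trans _ _ (mu (B `|` C))).
  by apply: le_measure_ae => //; exact: measurableU.
exact: measureU2.
Qed.

Lemma mUset B eps g : measurable B -> measurable_fun setT g ->
  measurable (B `&` [set t | eps <= `|g t|]).
Proof. by move=> mB mg; apply: measurableI => //; exact: mset_ge_abs. Qed.

Lemma L0m g : L0sf mu g -> measurable_fun setT g.
Proof. by case. Qed.

Lemma hausdorff f g : L0sf mu f -> L0sf mu g -> ~ aeq mu f g ->
  exists V W, [/\ lm_nbhd mu f V, lm_nbhd mu g W &
    forall h, L0sf mu h -> V h -> W h -> False].
Proof.
move=> Lf Lg naeq.
have Lfg := L0sfB Lf Lg; have [mh sh] := Lfg.
have [C [mC fC _ NC]] := sfs_cover sh.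
pose Dm n m := C n `&` [set t | (m.+1%:R^-1 <= `|f t - g t|)%R].
have mDm n m : measurable (Dm n m) by apply: mUset.
have [n [m pos]] : exists n m, (0 < mu (Dm n m))%E.
  apply: contrapT => K; apply: naeq.
  have H n m : mu (Dm n m) = 0%E.
    apply/eqP; rewrite eq_le measure_ge0 andbT leNgt; apply/negP => H.
    by apply: K; exists n, m.
  have Nn : mu.-negligible (\bigcup_n \bigcup_m Dm n m).
    apply: negligible_bigcup => n0; apply: negligible_bigcup => m0.
    by apply/negligibleP => //; exact: H.
  apply: negligibleS (negligibleU Nn NC) => t /= neq.
  have hne : f t - g t != 0 by rewrite subr_eq0; apply/eqP.
  have [Hc|Hc] := pselect ((\bigcup_n C n) t); last by right.
  left; case: Hc => n0 _ Cn0; exists n0 => //.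
  have hp : 0 < `|f t - g t| by rewrite normr_gt0.
  have [N0 HN0] := near_oo_ex (near_infty_natSinv_lt (PosNum hp)).
  by exists N0 => //; split => //=; apply: ltW; exact: HN0 N0 (leqnn _).
have [mCn fCn] := (mC n, fC n).
have finD : (mu (Dm n m) < +oo)%E.
  by apply: le_lt_trans fCn; apply: le_measure; rewrite ?inE//; apply: subIsetl.
pose m0 := fine (mu (Dm n m)).
have m0E : mu (Dm n m) = m0%:E by rewrite fineK// ge0_fin_numE.
have m0pos : 0 < m0 by rewrite -lte_fin -m0E.
pose e0 : R := m.+1%:R^-1.
have e0pos : 0 < e0 by rewrite invr_gt0 ltr0n.
pose eps := Num.min (e0 / 2) (m0 / 2).
have eps0 : 0 < eps by rewrite lt_min !divr_gt0.
exists (fun h => lm_U mu (C n) eps (fun t => h t - f t)),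
       (fun h => lm_U mu (C n) eps (fun t => h t - g t)).
split.
- by exists (C n), eps; split.
- by exists (C n), eps; split.
move=> h Lh Vh Wh.
have M1 : measurable (C n `&` [set t | eps <= `|h t - f t|]).
  by apply: mUset => //; apply: mfB; [case: Lh|case: Lf].
have M2 : measurable (C n `&` [set t | eps <= `|h t - g t|]).
  by apply: mUset => //; apply: mfB; [case: Lh|case: Lg].
have AE : {ae mu, forall t, Dm n m t -> (C n `&` [set t | eps <= `|h t - f t|]) t \/
    (C n `&` [set t | eps <= `|h t - g t|]) t}.
  apply: aeW => t [Ct Dt]; rewrite /=.
  have [H1|H1] := lerP eps `|h t - f t|; first by left.
  have [H2|H2] := lerP eps `|h t - g t|; first by right.
  exfalso; move: Dt; rewrite /= leNgt => /negP; apply.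
  have -> : f t - g t = (h t - g t) - (h t - f t) by ring.
  apply: (le_lt_trans (ler_normB _ _)).
  apply: (lt_le_trans (ltrD H2 H1)).
  rewrite [leRHS](splitr e0) lerD // ge_min lexx //.
have := le_measureU_ae (mDm n m) M1 M2 AE.
move=> /le_lt_trans /(_ (lteD Vh Wh)).
rewrite m0E -EFinD lte_fin; apply/negP; rewrite -leNgt.
have : eps <= m0 / 2 by rewrite ge_min lexx orbT.
by move=> H; rewrite [leRHS](splitr m0) lerD.
Qed.

End P7.

Section P8.
Context {d : measure_display} {T : measurableType d} {R : realType}.
Variable mu : {measure set T -> \bar R}.
Implicit Types (f g h : T -> R).

Lemma add_cont f g : L0sf mu f -> L0sf mu g -> forall V,
  lm_nbhd mu (fun t => f t + g t) V ->
  exists V1 V2, [/\ lm_nbhd mu f V1, lm_nbhd mu g V2 &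
    forall h1 h2, L0sf mu h1 -> L0sf mu h2 -> V1 h1 -> V2 h2 ->
      V (fun t => h1 t + h2 t)].
Proof.
move=> Lf Lg V [B [eps [mB fB eps0 HV]]].
have e2 : 0 < eps / 2 by rewrite divr_gt0.
exists (fun h => lm_U mu B (eps / 2) (fun t => h t - f t)),
       (fun h => lm_U mu B (eps / 2) (fun t => h t - g t)).
split; [by exists B, (eps / 2); split|by exists B, (eps / 2); split|].
move=> h1 h2 L1 L2 V1 V2; apply: HV; first exact: L0sfD.
have M0 : measurable (B `&` [set t | eps <= `|h1 t + h2 t - (f t + g t)|]).
  by apply: mUset => //; apply: mfB; apply: mfD; [case: L1|case: L2|case: Lf|case: Lg].
have M1 : measurable (B `&` [set t | eps / 2 <= `|h1 t - f t|]).
  by apply: mUset => //; apply: mfB; [case: L1|case: Lf].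
have M2 : measurable (B `&` [set t | eps / 2 <= `|h2 t - g t|]).
  by apply: mUset => //; apply: mfB; [case: L2|case: Lg].
have AE : {ae mu, forall t,
    (B `&` [set t | eps <= `|h1 t + h2 t - (f t + g t)|]) t ->
    (B `&` [set t | eps / 2 <= `|h1 t - f t|]) t \/
    (B `&` [set t | eps / 2 <= `|h2 t - g t|]) t}.
  apply: aeW => t [Bt Dt]; rewrite /=.
  have [H1|H1] := lerP (eps / 2) `|h1 t - f t|; first by left.
  have [H2|H2] := lerP (eps / 2) `|h2 t - g t|; first by right.
  exfalso; move: Dt; rewrite /= leNgt => /negP; apply.
  have -> : h1 t + h2 t - (f t + g t) = (h1 t - f t) + (h2 t - g t) by ring.
  apply: (le_lt_trans (ler_normD _ _)).
  by rewrite [ltRHS](splitr eps) ltrD.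
rewrite /lm_U.
have := le_measureU_ae M0 M1 M2 AE.
move=> /le_lt_trans /(_ (lteD V1 V2)).
by rewrite -EFinD -splitr.
Qed.

Lemma solid_basis : forall V, lm_nbhd mu (fun _ => 0) V ->
  exists W, [/\ lm_nbhd mu (fun _ => 0) W, solid_E mu W &
    forall h, L0sf mu h -> W h -> V h].
Proof.
move=> V [B [eps [mB fB eps0 HV]]].
exists (fun h => lm_U mu B eps (fun t => h t - 0)); split.
- by exists B, eps; split.
- move=> g h Lg Lh Wh gh; rewrite /lm_U.
  apply: le_lt_trans Wh.
  apply: le_measure_ae.
  + by apply: mUset => //; apply: mfB; [case: Lg|exact: measurable_cst].
  + by apply: mUset => //; apply: mfB; [case: Lh|exact: measurable_cst].
  + apply: filterS gh => t gh [Bt /= Ht]; split => //=.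
    by move: Ht; rewrite !subr0 => Ht; apply: (le_trans Ht).
- by move=> h Lh Wh; apply: HV.
Qed.

End P8.

Section P9.
Context {d : measure_display} {T : measurableType d} {R : realType}.
Variable mu : {measure set T -> \bar R}.
Implicit Types (f g h : T -> R).

Lemma tail_small (B : set T) f (eps : R) : measurable B -> (mu B < +oo)%E ->
  measurable_fun setT f -> 0 < eps ->
  exists N : nat, (mu (B `&` [set t | (N.+1%:R <= `|f t|)%R]) < eps%:E)%E.
Proof.
move=> mB fB mf eps0.
pose F n := B `&` [set t | (n.+1%:R : R) <= `|f t|].
have mF n : measurable (F n) by apply: mUset.
have mcF : measurable (\bigcap_n F n) by apply: bigcapT_measurable.
have niF : nonincreasing_seq F.
  move=> m n mn; apply/subsetPset => t [Bt /= Ht]; split => //=.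
  by apply: le_trans Ht; rewrite ler_nat ltnS.
have F0 : (mu (F 0%N) < +oo)%E.
  by rewrite (le_lt_trans _ fB)// le_measure// ?inE//; apply: subIsetl.
have cvF := nonincreasing_cvg_mu F0 mF mcF niF.
have E0 : \bigcap_n F n = set0.
  apply/seteqP; split => // t Ft.
  pose k := Num.trunc `|f t|.
  have [_ /= Hk] := Ft k I.
  have : `|f t| < k.+1%:R by exact: truncnS_gt.
  by rewrite ltNge Hk.
rewrite E0 measure0 in cvF.
move/fine_cvgP : cvF => [finF cvF'].
have H := @cvgr_lt R nat \oo _ _ 0 cvF' eps eps0.
have HH : \forall N \near \oo, (mu (F N) < eps%:E)%E.
  apply: filterS2 finF (H eventually_filter) => N fN lN.
  by move: lN fN => /=; case: (mu (F N)) => // r; rewrite lte_fin.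
have [N HN] := near_oo_ex HH.
by exists N; exact: HN N (leqnn N).
Qed.

Lemma scale_cont (c : R) f : L0sf mu f -> forall V,
  lm_nbhd mu (fun t => c * f t) V ->
  exists (e : R) W, [/\ 0 < e, lm_nbhd mu f W &
    forall (c' : R) h, `|c' - c| < e -> L0sf mu h -> W h ->
      V (fun t => c' * h t)].
Proof.
move=> Lf V [B [eps [mB fB eps0 HV]]].
have e2 : 0 < eps / 2 by rewrite divr_gt0.
have [N HN] := tail_small mB fB Lf.1 e2.
pose M : R := N.+1%:R.
have M0 : 0 < M by rewrite ltr0n.
have c1 : 0 < `|c| + 1 by rewrite ltr_wpDl.
pose eta := Num.min (eps / 2) (eps / (2 * (`|c| + 1))).
have eta0 : 0 < eta by rewrite lt_min e2 divr_gt0// mulr_gt0.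
pose e := Num.min 1 (eps / (2 * M)).
have epos : 0 < e by rewrite lt_min ltr01 divr_gt0// mulr_gt0.
exists e, (fun h => lm_U mu B eta (fun t => h t - f t)); split => //.
  by exists B, eta; split.
move=> c' h cc' Lh Wh; apply: HV; first exact: L0sfM.
have M0s : measurable (B `&` [set t | eps <= `|c' * h t - c * f t|]).
  apply: mUset => //; apply: mfB; apply: mfM; try exact: measurable_cst.
  by case: Lh. by case: Lf.
have M1 : measurable (B `&` [set t | eta <= `|h t - f t|]).
  by apply: mUset => //; apply: mfB; [case: Lh|case: Lf].
have M2 : measurable (B `&` [set t | M <= `|f t|]).
  by apply: mUset => //; case: Lf.
have AE : {ae mu, forall t,
    (B `&` [set t | eps <= `|c' * h t - c * f t|]) t ->
    (B `&` [set t | eta <= `|h t - f t|]) t \/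
    (B `&` [set t | M <= `|f t|]) t}.
  apply: aeW => t [Bt Dt]; rewrite /=.
  have [H1|H1] := lerP eta `|h t - f t|; first by left.
  have [H2|H2] := lerP M `|f t|; first by right.
  exfalso; move: Dt; rewrite /= leNgt => /negP; apply.
  have -> : c' * h t - c * f t = c' * (h t - f t) + (c' - c) * f t by ring.
  apply: (le_lt_trans (ler_normD _ _)); rewrite !normrM.
  have ca : `|c'| <= `|c| + 1.
    have -> : c' = c + (c' - c) by ring.
    apply: (le_trans (ler_normD _ _)); rewrite lerD2l.
    by apply: ltW; apply: (lt_le_trans cc'); rewrite ge_min lexx.
  have T1 : `|c'| * `|h t - f t| < eps / 2.
    apply: (@le_lt_trans _ _ ((`|c| + 1) * `|h t - f t|)).
      by apply: ler_wpM2r.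
    apply: (@lt_le_trans _ _ ((`|c| + 1) * eta)); first by rewrite ltr_pM2l.
    apply: (@le_trans _ _ ((`|c| + 1) * (eps / (2 * (`|c| + 1))))).
      by rewrite ler_pM2l// ge_min lexx orbT.
    have -> : (`|c| + 1) * (eps / (2 * (`|c| + 1))) = eps / 2.
      by field; try by rewrite (gt_eqF c1).
    by [].
  have T2 : `|c' - c| * `|f t| <= eps / 2.
    apply: (@le_trans _ _ (e * M)).
      by apply: ler_pM => //; apply: ltW.
    apply: (@le_trans _ _ ((eps / (2 * M)) * M)).
      by rewrite ler_pM2r// ge_min lexx orbT.
    have -> : (eps / (2 * M)) * M = eps / 2 by field; try by rewrite (gt_eqF M0).
    by [].
  by rewrite [ltRHS](splitr eps); apply: ltr_leD.
rewrite /lm_U.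
have := le_measureU_ae M0s M1 M2 AE.
move=> /le_lt_trans /(_ (lteD Wh HN)).
move=> H; apply: (lt_le_trans H).
rewrite -EFinD lee_fin [leRHS](splitr eps) lerD2r ge_min lexx //.
Qed.

End P9.

Section P10.
Context {d : measure_display} {T : measurableType d} {R : realType}.
Variable mu : {measure set T -> \bar R}.
Implicit Types (f g h : T -> R).

Lemma dec_net (Bt : Type) (leB : Bt -> Bt -> Prop) (y : Bt -> T -> R) :
  directed leB -> (forall b, L0sf mu (y b)) ->
  (forall b1 b2, leB b1 b2 -> ale mu (y b2) (y b1)) ->
  (forall b, ale mu (fun _ => 0) (y b)) ->
  (forall z, L0sf mu z -> (forall b, ale mu z (y b)) -> ale mu z (fun _ => 0)) ->
  forall (Bs : set T) (eps delta : R), measurable Bs -> (mu Bs < +oo)%E ->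
  0 < eps -> 0 < delta ->
  exists b, (mu (Bs `&` [set t | (eps <= y b t)%R]) < delta%:E)%E.
Proof.
move=> [[b_init _] [refl [trans dir]]] Ly decr pos inf Bs eps delta mBs fBs
  eps0 delta0.
pose Sb b := Bs `&` [set t | eps <= y b t].
have mSb b : measurable (Sb b).
  by apply: measurableI => //; apply: mset_le; [exact: measurable_cst|exact: (Ly b).1].
pose m b := mu (Sb b).
have mfin b : (m b <= mu Bs)%E.
  by apply: le_measure; rewrite ?inE//; apply: subIsetl.
have mono b b' : leB b b' -> (m b' <= m b)%E.
  move=> bb'; apply: le_measure_ae => //; apply: filterS (decr _ _ bb').
  by move=> t H [Bst Ht]; split => //; exact: (le_trans Ht H).
pose c := ereal_inf (range m).
have c_le b : (c <= m b)%E by apply: ereal_inf_lbound; exists b.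
have c_ge0 : (0 <= c)%E.
  by apply: le_ereal_inf_tmp => _ [b _ <-]; exact: measure_ge0.
have cfin : c \is a fin_num.
  by rewrite ge0_fin_numE // (le_lt_trans (c_le b_init)) // (le_lt_trans (mfin b_init)).
have [clt|cge] := ltP c delta%:E.
  by have [_ [b _ <-] Hb] := ereal_inf_lt clt; exists b.
exfalso.
have cpos : (0 < c)%E by apply: lt_le_trans cge; rewrite lte_fin.
have Hp n : exists b, (m b < c + (ep n)%:E)%E.
  have : (c < c + (ep n)%:E)%E by rewrite lteDl // lte_fin ep_gt0.
  by move=> /ereal_inf_lt [_ [b _ <-] Hb]; exists b.
have [bp Hbp] := choice Hp.
have [dsel Hdsel] := choice (fun p : Bt * Bt => dir p.1 p.2).
pose bs := fix bs n := match n with 0%N => bp 0%N | k.+1 => dsel (bs k, bp k.+1) end.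
have bsS n : leB (bs n) (bs n.+1) by have [] := Hdsel (bs n, bp n.+1).
have bpbs n : leB (bp n) (bs n).
  by case: n => [|n]; [exact: refl|have [] := Hdsel (bs n, bp n.+1)].
have bs_mono k n : (k <= n)%N -> leB (bs k) (bs n).
  elim: n => [|n IH]; first by rewrite leqn0 => /eqP ->; exact: refl.
  rewrite leq_eqVlt => /orP[/eqP ->|kn]; first exact: refl.
  exact: trans (IH kn) (bsS n).
have mbs n : (m (bs n) < c + (ep n)%:E)%E.
  exact: le_lt_trans (mono _ _ (bpbs n)) (Hbp n).
pose Gn n := Bs `&` \bigcap_(k in [set k | (k <= n)%N]) [set t | eps <= y (bs k) t].
have mGn n : measurable (Gn n).
  apply: measurableI => //; apply: bigcap_measurableType => k _.
  by apply: mset_le; [exact: measurable_cst|exact: (Ly _).1].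
have Gn_sub n : Gn n `<=` Sb (bs n).
  by move=> t [Bst H]; split => //; exact: H n (leqnn n).
have Gn_ae n : {ae mu, forall t, Sb (bs n) t -> Gn n t}.
  have HP k : {ae mu, forall t, (k <= n)%N -> y (bs n) t <= y (bs k) t}.
    have [kn|kn] := boolP (k <= n)%N.
      by apply: filterS (decr _ _ (bs_mono k n kn)) => t H _.
    by apply: aeW => t.
  apply: filterS (ae_foralln HP) => t H [Bst Ht]; split => // k /= kn.
  exact: (le_trans Ht (H k kn)).
have mGn_eq n : mu (Gn n) = m (bs n).
  apply/eqP; rewrite eq_le; apply/andP; split.
    by apply: le_measure; rewrite ?inE//; exact: Gn_sub.
  exact: le_measure_ae (Gn_ae n).
have niG : nonincreasing_seq Gn.
  move=> k n kn; apply/subsetPset => t [Bst H]; split => // j /= jk.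
  by apply: H; exact: leq_trans jk kn.
pose G := \bigcap_n Gn n.
have mG : measurable G by apply: bigcapT_measurable.
have G0 : (mu (Gn 0%N) < +oo)%E by rewrite mGn_eq (le_lt_trans (mfin _)).
have cvG := nonincreasing_cvg_mu G0 mGn mG niG.
have c_le_G : (c <= mu G)%E.
  rewrite -(cvg_lim _ cvG) //; apply: lime_ge; first by apply/cvg_ex; exists (mu G).
  by apply: nearW => n /=; rewrite mGn_eq; exact: c_le.
have Hnull b : mu (G `\` [set t | eps <= y b t]) = 0%E.
  set Hs := G `\` _.
  have mH : measurable Hs.
    apply: measurableD => //.
    by apply: mset_le; [exact: measurable_cst|exact: (Ly _).1].
  apply/eqP; rewrite eq_le measure_ge0 andbT.
  apply/lee_addgt0Pr => e e0; rewrite add0e.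
  have [n Hn] := near_oo_ex (ep_small e0); have epn := Hn n (leqnn n).
  pose cn := dsel (b, bs n).
  have [bcn bscn] := Hdsel (b, bs n).
  have h1 : (m cn <= mu (Gn n `\` Hs))%E.
    apply: le_measure_ae => //; first exact: measurableD.
    have A1 := decr _ _ bscn; have A2 := decr _ _ bcn; have A3 := Gn_ae n.
    apply: filterS (ae_and A1 (ae_and A2 A3)) => t [h1 [h2 h3]] [Bst Ht].
    split; first by apply: h3; split => //; exact: (le_trans Ht h1).
    by move=> [_ /= nH]; apply: nH; exact: (le_trans Ht h2).
  have h2 : mu (Gn n) = (mu (Gn n `\` Hs) + mu Hs)%E.
    rewrite (measureDI mu (mGn n) mH); congr (_ + _)%E; congr (mu _).
    apply/seteqP; split => t; first by case.
    by move=> Ht; split => //; have [Gt _] := Ht; exact: Gt n I.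
  have : (c + mu Hs < c + (ep n)%:E)%E.
    apply: le_lt_trans (mbs n); rewrite -mGn_eq h2; apply: leeD2r.
    exact: le_trans (c_le cn) h1.
  rewrite lteD2lE // => /ltW H; apply: (le_trans H).
  by rewrite lee_fin ltW.
pose z := fun t => eps * (\1_G t : R).
have mufG : (mu G < +oo)%E.
  apply: le_lt_trans G0; apply: le_measure; rewrite ?inE//.
  by move=> t Gt; exact: Gt 0%N I.
have Lz : L0sf mu z := L0sfM eps (L0sf_ind mG mufG).
have zle b : ale mu z (y b).
  have mH : measurable (G `\` [set t | eps <= y b t]).
    apply: measurableD => //.
    by apply: mset_le; [exact: measurable_cst|exact: (Ly _).1].
  have AH : {ae mu, forall t, ~ (G `\` [set t | eps <= y b t]) t}.
    apply: (@ae_negl _ _ _ mu _ _ ((negligibleP mu mH).2 (Hnull b))).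
    by move=> t.
  apply: filterS2 (pos b) AH => t p nH; rewrite /z indicE.
  case: (boolP (t \in G)) => [/set_mem Gt|_]; last by rewrite mulr0.
  rewrite mulr1; apply: contrapT => K; apply: nH; split => //.
have hN := inf z Lz zle.
have G00 : mu G = 0%E.
  apply/(negligibleP mu mG); apply: negligibleS hN => t Gt /=.
  by rewrite /z indicE mem_set // mulr1 leNgt eps0.
by move: c_le_G; rewrite G00 leNgt cpos.
Qed.

Lemma uo_lm (A : Type) (le : A -> A -> Prop) (x : A -> T -> R) (f : T -> R) :
  directed le -> (forall a, L0sf mu (x a)) -> L0sf mu f ->
  uo_conv mu le x f -> lm_tconv mu le x f.
Proof.
move=> dir Lx Lf uo V [B [eps [mB fB eps0 HV]]].
have [Bty [leB [y [dirB Ly decr [pos inf] ev]]]] := uo _ (L0sf_ind mB fB).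
pose eps' := Num.min eps 1.
have eps'0 : 0 < eps' by rewrite lt_min eps0 ltr01.
have [b0 Hb0] := dec_net dirB Ly decr pos inf mB fB eps'0 eps0.
have [a0 Ha0] := ev b0.
exists a0 => a /Ha0 Hle; apply: HV; first exact: Lx.
rewrite /lm_U; apply: le_lt_trans Hb0.
apply: le_measure_ae.
- by apply: mUset => //; apply: mfB; [case: (Lx a)|case: Lf].
- by apply: measurableI => //; apply: mset_le; [exact: measurable_cst|exact: (Ly _).1].
apply: filterS Hle => t H [Bst /= Ht]; split => //=.
apply: le_trans H; rewrite subr0 indicE mem_set // normr1.
rewrite ger0_norm; last by rewrite le_min normr_ge0 ler01.
by rewrite le_min !ge_min Ht lexx orbT /=.
Qed.

End P10.


Unset Implicit Arguments. Set Strict Implicit. Set Printing Implicit Defensive.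

Theorem corollary5p12 (d : measure_display) (T : measurableType d) (R : realType)
    (mu : {measure set T -> \bar R}) :
  semi_finite mu ->
  [/\ (* the topology of local convergence in measure is a uo-Lebesgue topology on E *)
      lm_is_uo_Lebesgue mu,
      (* its net convergence is local convergence in measure *)
      (forall (A : Type) (le : A -> A -> Prop) (x : A -> T -> R) (f : T -> R),
         directed le -> (forall a, L0sf mu (x a)) -> L0sf mu f ->
         (lm_tconv mu le x f <-> lm_conv mu le x f)),
      (* E has the countable sup property *)
      countable_sup_property mu,
      (* (1) *)
      (forall (A : Type) (le : A -> A -> Prop) (x : A -> T -> R) (f : T -> R),
         directed le -> (forall a, L0sf mu (x a)) -> L0sf mu f ->
         lm_conv mu le x f ->
         exists alpha : nat -> A,
           [/\ embedded le alpha,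
               {ae mu, forall t, (fun n => x (alpha n) t) @ \oo --> f t} &
               lm_conv mu natle (fun n => x (alpha n)) f]) &
      (* (2) *)
      (forall (x : nat -> T -> R) (f : T -> R),
         (forall n, L0sf mu (x n)) -> L0sf mu f ->
         (lm_conv mu natle x f <->
          forall phi : nat -> nat, {homo phi : m n / (m < n)%N} ->
            exists psi : nat -> nat, {homo psi : m n / (m < n)%N} /\
              {ae mu, forall t, (fun n => x (phi (psi n)) t) @ \oo --> f t}))].
Proof.
move=> _; split.
- split.
  + by move=> f g Lf Lg naeq; exact: hausdorff.
  + by move=> f g Lf Lg V HV; exact: add_cont.
  + by move=> c f Lf V HV; exact: scale_cont.
  + exact: solid_basis.
  + by move=> A le x f dir Lx Lf uo; exact: uo_lm.
- by move=> A le x f dir Lx Lf; exact: part_tconv.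
- exact: csp.
- by move=> A le x f dir Lx Lf lmc; exact: part1.
- by move=> x f Lx Lf; exact: part2.
Qed.
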